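(* Let $X=\ell_p$ for some $1\le p<\infty$, or $X=c_0$, considered as a Banach algebra under coordinatewise multiplication, and let $\lambda\in\mathbb C$ with $|\lambda|>1$. Let $\lambda B$ be the operator $\lambda B(x(1),x(2),x(3),\ldots)=(\lambda x(2),\lambda x(3),\lambda x(4),\ldots)$ on $X$. If $x$ is a frequently hypercyclic vector for $\lambda B$, then there exists a natural number $M$ such that the coordinatewise power $x^m$ is not a hypercyclic vector for $\lambda B$ for any $m\geq M$.
   Context: For an operator $T$ on $X$, a vector $x$ is hypercyclic if $\{x,Tx,T^2x,\ldots\}$ is dense in $X$; it is frequently hypercyclic if for every non-empty open $U\subset X$ the set $\{n\in\mathbb N_0: T^nx\in U\}$ has positive lower density, where the lower density of $A\subset\mathbb N_0$ is $\liminf_{N\to\infty}\frac{\mathrm{card}\{0\le n\le N:n\in A\}}{N+1}$. *)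

(* Defs.v *)
From Stdlib Require Import Reals ClassicalEpsilon.
From Coquelicot Require Import Coquelicot.
Open Scope R_scope.

(* a^p for a >= 0 and real p > 0, with the convention 0^p = 0
   (Stdlib's Rpower gives Rpower 0 p = 1, so we fix it). *)
Definition powp (a p : R) : R := if Req_EM_T a 0 then 0 else Rpower a p.

Inductive seqspace := Lp (p : R) | C0.

Definition valid_space (X : seqspace) : Prop :=
  match X with Lp p => 1 <= p | C0 => True end.

Definition in_space (X : seqspace) (x : nat -> C) : Prop :=
  match X with
  | Lp p => ex_series (fun n => powp (Cmod (x n)) p)
  | C0 => is_lim_seq (fun n => Cmod (x n)) 0
  end.

Definition snorm (X : seqspace) (x : nat -> C) : R :=
  match X with
  | Lp p => powp (Series (fun n => powp (Cmod (x n)) p)) (/ p)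
  | C0 => real (Sup_seq (fun n => Cmod (x n)))
  end.

Definition sdist (X : seqspace) (x y : nat -> C) : R :=
  snorm X (fun n => Cminus (x n) (y n)).

Definition open_in (X : seqspace) (U : (nat -> C) -> Prop) : Prop :=
  (forall u, U u -> in_space X u) /\
  (forall u, U u -> exists eps, 0 < eps /\
     forall v, in_space X v -> sdist X u v < eps -> U v).

Definition lamB (lam : C) (x : nat -> C) : nat -> C :=
  fun n => Cmult lam (x (S n)).

Fixpoint Cpown (z : C) (m : nat) : C :=
  match m with O => RtoC 1 | S k => Cmult z (Cpown z k) end.
Definition seq_pow (x : nat -> C) (m : nat) : nat -> C := fun n => Cpown (x n) m.

Definition hypercyclic (X : seqspace) (T : (nat -> C) -> (nat -> C)) (x : nat -> C) : Prop :=
  in_space X x /\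
  forall y, in_space X y -> forall eps, 0 < eps ->
    exists n : nat, sdist X (Nat.iter n T x) y < eps.

Definition indic (A : nat -> Prop) (n : nat) : R :=
  if excluded_middle_informative (A n) then 1 else 0.
Definition count_upto (A : nat -> Prop) (N : nat) : R := sum_f_R0 (indic A) N.
Definition lower_density (A : nat -> Prop) : Rbar :=
  LimInf_seq (fun N => count_upto A N / INR (S N)).

Definition freq_hypercyclic (X : seqspace) (T : (nat -> C) -> (nat -> C)) (x : nat -> C) : Prop :=
  in_space X x /\
  forall U, open_in X U -> (exists u, U u) ->
    Rbar_lt 0 (lower_density (fun n => U (Nat.iter n T x))).

(* Main.v *)
Require Import Defs.
From Stdlib Require Import Reals Lra Lia Arith ZArith ClassicalEpsilon Classical.
From Coquelicot Require Import Coquelicot.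
Open Scope R_scope.

Lemma Series_zero : Series (fun _ => 0) = 0.
Proof.
  rewrite (Series_ext _ (fun n => 0 * (fun _ => 1) n)) by (intros; ring).
  rewrite Series_scal_l. ring.
Qed.

Lemma sum_ge_term (f : nat -> R) (i N : nat) :
  (forall n, 0 <= f n) -> (i <= N)%nat -> f i <= sum_f_R0 f N.
Proof.
  intros Hf HiN. induction N as [|N IH].
  - assert (i = 0%nat) by lia. subst. simpl. lra.
  - simpl. destruct (Nat.eq_dec i (S N)).
    + subst. pose proof (cond_pos_sum f N Hf). lra.
    + specialize (IH ltac:(lia)). specialize (Hf (S N)). lra.
Qed.

Lemma term_le_Series (f : nat -> R) (i : nat) :
  (forall n, 0 <= f n) -> ex_series f -> f i <= Series f.
Proof.
  intros Hf Hex.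
  rewrite (Series_incr_n f (S i)) by (auto; lia). simpl Init.Nat.pred.
  assert (0 <= Series (fun k => f (S i + k)%nat)).
  { rewrite <- Series_zero. apply Series_le.
    - intros; split; [lra | apply Hf].
    - apply (ex_series_incr_n f (S i)); auto. }
  pose proof (sum_ge_term f i i Hf (le_n _)). lra.
Qed.

Lemma powp_nonneg a p : 0 <= powp a p.
Proof. unfold powp. destruct (Req_EM_T a 0). lra. unfold Rpower. left; apply exp_pos. Qed.

Lemma powp_pos a p : 0 < a -> powp a p = Rpower a p.
Proof. intros. unfold powp. destruct (Req_EM_T a 0). lra. auto. Qed.

Lemma powp_0 p : powp 0 p = 0.
Proof. unfold powp. destruct (Req_EM_T 0 0). auto. lra. Qed.

Lemma powp_inv a p : 0 <= a -> 0 < p -> powp (powp a p) (/ p) = a.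
Proof.
  intros Ha Hp. destruct (Req_dec a 0) as [->|Hn].
  - rewrite !powp_0. auto.
  - assert (0 < a) by lra. rewrite (powp_pos a) by auto.
    rewrite powp_pos by (unfold Rpower; apply exp_pos).
    rewrite Rpower_mult. rewrite Rinv_r by lra. apply Rpower_1; auto.
Qed.

Lemma powp_le a b p : 0 <= a <= b -> 0 < p -> powp a p <= powp b p.
Proof.
  intros Hab Hp. destruct (Req_dec a 0) as [->|Hn].
  - rewrite powp_0. apply powp_nonneg.
  - rewrite !powp_pos by lra. apply Rle_Rpower_l; lra.
Qed.

Lemma powp_mult a b p : 0 <= a -> 0 <= b -> powp (a * b) p = powp a p * powp b p.
Proof.
  intros Ha Hb. destruct (Req_dec a 0) as [->|Hna].
  - rewrite Rmult_0_l, powp_0. ring.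
  - destruct (Req_dec b 0) as [->|Hnb].
    + rewrite Rmult_0_r, powp_0. ring.
    + rewrite !powp_pos; try nra. rewrite Rpower_mult_distr; auto; lra.
Qed.

Lemma powp_sub a b c p : 0 <= a -> 0 <= b -> 0 <= c <= a + b -> 0 < p ->
  powp c p <= Rpower 2 p * (powp a p + powp b p).
Proof.
  intros Ha Hb Hc Hp.
  assert (H2 : 0 < Rpower 2 p) by (unfold Rpower; apply exp_pos).
  pose proof (powp_nonneg a p). pose proof (powp_nonneg b p).
  destruct (Req_dec c 0) as [->|Hnc].
  - rewrite powp_0. nra.
  - assert (Hm : powp (Rmax a b) p <= powp a p + powp b p).
    { apply Rmax_case; lra. }
    assert (powp c p <= powp (2 * Rmax a b) p).
    { apply powp_le; auto. split. lra.
      pose proof (Rmax_l a b). pose proof (Rmax_r a b). lra. }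
    rewrite powp_mult in H1 by (try lra; pose proof (Rmax_l a b); lra).
    rewrite (powp_pos 2) in H1 by lra. nra.
Qed.

Lemma in_space_sub X u v : valid_space X -> in_space X u -> in_space X v ->
  in_space X (fun n => Cminus (u n) (v n)).
Proof.
  destruct X as [p|]; simpl; intros Hv Hu Hw.
  - apply (@ex_series_le R_AbsRing R_CompleteNormedModule _ (fun n => Rpower 2 p * (powp (Cmod (u n)) p + powp (Cmod (v n)) p))).
    + intros n. rewrite Rabs_pos_eq by apply powp_nonneg.
      apply powp_sub; try apply Cmod_ge_0; try lra.
      split; [apply Cmod_ge_0|]. unfold Cminus.
      pose proof (Cmod_triangle (u n) (Copp (v n))). rewrite Cmod_opp in H. lra.
    + apply (ex_series_scal_l (Rpower 2 p) (fun n => powp (Cmod (u n)) p + powp (Cmod (v n)) p)).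
      apply (ex_series_plus (fun n => powp (Cmod (u n)) p) (fun n => powp (Cmod (v n)) p)); auto.
  - apply (is_lim_seq_le_le (fun _ => 0) _ (fun n => Cmod (u n) + Cmod (v n))).
    + intros n. split. apply Cmod_ge_0. unfold Cminus.
      pose proof (Cmod_triangle (u n) (Copp (v n))). rewrite Cmod_opp in H. lra.
    + apply is_lim_seq_const.
    + replace (Finite 0) with (Finite (0 + 0)) by (f_equal; ring).
      apply is_lim_seq_plus'; auto.
Qed.

Lemma in_space_lamB X lam v : in_space X v -> in_space X (lamB lam v).
Proof.
  unfold lamB. destruct X as [p|]; simpl; intros Hv.
  - apply (ex_series_ext (fun n => scal (powp (Cmod lam) p) ((fun k => powp (Cmod (v k)) p) (S n)))).
    + intros n. rewrite Cmod_mult, powp_mult by apply Cmod_ge_0. reflexivity.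
    + apply (@ex_series_scal_l R_AbsRing R_NormedModule). apply (ex_series_incr_1 (fun k => powp (Cmod (v k)) p)). auto.
  - apply (is_lim_seq_ext (fun n => Cmod lam * (fun k => Cmod (v k)) (S n))).
    + intros n. rewrite Cmod_mult. reflexivity.
    + replace (Finite 0) with (Rbar_mult (Cmod lam) 0) by (simpl; f_equal; ring).
      apply is_lim_seq_scal_l. apply (is_lim_seq_incr_1 (fun k => Cmod (v k))). auto.
Qed.

Lemma coord_le X w i : valid_space X -> in_space X w -> Cmod (w i) <= snorm X w.
Proof.
  destruct X as [p|]; simpl; intros Hv Hw.
  - rewrite <- (powp_inv (Cmod (w i)) p) by (try apply Cmod_ge_0; lra).
    apply powp_le.
    + split. apply powp_nonneg.
      apply (term_le_Series (fun n => powp (Cmod (w n)) p)); auto.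
      intros; apply powp_nonneg.
    + apply Rinv_0_lt_compat; lra.
  - apply is_lim_seq_spec in Hw. destruct (Hw (mkposreal 1 Rlt_0_1)) as [N HN].
    pose proof (Sup_seq_correct (fun n => Cmod (w n))) as HS.
    destruct (Sup_seq (fun n => Cmod (w n))) as [l| |] eqn:E; simpl in HS |- *.
    + apply Rnot_lt_le. intro Hlt.
      destruct (HS (mkposreal (Cmod (w i) - l) ltac:(lra))) as [H1 _].
      specialize (H1 i). simpl in H1. lra.
    + exfalso. destruct (HS (1 + sum_f_R0 (fun n => Cmod (w n)) N)) as [n Hn].
      simpl in Hn. pose proof (cond_pos_sum (fun n => Cmod (w n)) N (fun n => Cmod_ge_0 _)).
      destruct (le_lt_dec n N).
      * pose proof (sum_ge_term (fun n => Cmod (w n)) n N (fun n => Cmod_ge_0 _) l). lra.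
      * specialize (HN n ltac:(lia)). simpl in HN. rewrite Rminus_0_r, Rabs_pos_eq in HN by apply Cmod_ge_0. lra.
    + exfalso. specialize (HS (Cmod (w i)) i). simpl in HS. lra.
Qed.

Lemma nat_gt (r : R) : exists n : nat, r < INR n.
Proof.
  destruct (archimed (Rabs r)) as [H1 _].
  assert (Hz : (0 <= up (Rabs r))%Z).
  { apply le_IZR. pose proof (Rabs_pos r). simpl. lra. }
  exists (Z.to_nat (up (Rabs r))). rewrite INR_IZR_INZ, Z2Nat.id by auto.
  pose proof (Rle_abs r). lra.
Qed.

Lemma iter_lamB lam v n : forall i,
  Nat.iter n (lamB lam) v i = Cmult (Cpown lam n) (v (n + i)%nat).
Proof.
  induction n as [|n IH]; intros i; simpl.
  - rewrite Cmult_1_l. reflexivity.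
  - unfold lamB. rewrite IH. replace (n + S i)%nat with (S (n + i)) by lia.
    rewrite Cmult_assoc. reflexivity.
Qed.

Lemma Cmod_Cpown z m : Cmod (Cpown z m) = Cmod z ^ m.
Proof.
  induction m; simpl. apply Cmod_1. rewrite Cmod_mult, IHm. reflexivity.
Qed.

Lemma in_space_iter X lam v n : in_space X v -> in_space X (Nat.iter n (lamB lam) v).
Proof. induction n; simpl; auto. intros; apply in_space_lamB; auto. Qed.

Lemma count_bound (A : nat -> Prop) (r : R) N : 0 <= r ->
  (forall k, (k <= N)%nat -> A k -> INR k < r) ->
  count_upto A N <= INR (S N) /\ count_upto A N <= r + 1.
Proof.
  intros Hr. unfold count_upto, indic. induction N as [|N IH]; intros HA.
  - simpl. destruct (excluded_middle_informative (A 0%nat)).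
    + split. lra. specialize (HA 0%nat (le_n _) a). simpl in HA. lra.
    + lra.
  - destruct IH as [I1 I2]. intros; apply HA; auto.
    rewrite tech5. rewrite (S_INR (S N)).
    destruct (excluded_middle_informative (A (S N))).
    + specialize (HA (S N) (le_n _) a). rewrite S_INR in HA, I1. rewrite S_INR. lra.
    + lra.
Qed.

Lemma density_pos (A : nat -> Prop) : Rbar_lt 0 (lower_density A) ->
  exists d, 0 < d /\ exists N1, forall N, (N1 <= N)%nat -> d * INR (S N) < count_upto A N.
Proof.
  unfold lower_density. intros H.
  destruct (ex_LimInf_seq (fun N => count_upto A N / INR (S N))) as [L HL].
  rewrite (is_LimInf_seq_unique _ _ HL) in H.
  assert (Hpos : forall N, 0 < INR (S N)) by (intros; apply lt_0_INR; lia).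
  destruct L as [l| |]; simpl in H, HL.
  - exists (l/2). split. lra.
    destruct (HL (mkposreal (l/2) ltac:(lra))) as [_ [N1 HN]]. exists N1.
    intros N HN1. specialize (HN N HN1). simpl in HN. specialize (Hpos N).
    apply (Rmult_lt_compat_r (INR (S N))) in HN; auto.
    unfold Rdiv in HN. rewrite Rmult_assoc, Rinv_l in HN by lra. lra.
  - exists 1. split. lra. destruct (HL 1) as [N1 HN]. exists N1.
    intros N HN1. specialize (HN N HN1). specialize (Hpos N).
    apply (Rmult_lt_compat_r (INR (S N))) in HN; auto.
    unfold Rdiv in HN. rewrite Rmult_assoc, Rinv_l in HN by lra. lra.
  - contradiction.
Qed.

Theorem proposition1p2 (X : seqspace) (lam : C) (x : nat -> C) :
  valid_space X -> 1 < Cmod lam ->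
  freq_hypercyclic X (lamB lam) x ->
  exists M : nat, forall m : nat, (M <= m)%nat ->
    ~ hypercyclic X (lamB lam) (seq_pow x m).
Proof.
  intros Hv Hl [Hx HF].
  set (l := Cmod lam).
  set (U := fun v : nat -> C => in_space X v /\ exists r, r < 1 /\ forall i, Cmod (v i) <= r).
  assert (HU : open_in X U).
  { split. intros u [Hu _]; auto.
    intros u [Hu [r [Hr Hri]]]. exists (1 - r). split. lra.
    intros v Hvs Hd. split; auto. exists (r + sdist X u v). split. lra.
    intros i. unfold sdist in *.
    pose proof (coord_le X (fun n => Cminus (u n) (v n)) i Hv (in_space_sub X u v Hv Hu Hvs)).
    simpl in H.
    replace (v i) with (Cplus (u i) (Copp (Cminus (u i) (v i)))) by ring.
    pose proof (Cmod_triangle (u i) (Copp (Cminus (u i) (v i)))).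
    rewrite Cmod_opp in H0. specialize (Hri i). lra. }
  assert (HUne : exists u, U u).
  { exists (fun _ => RtoC 0). split.
    - destruct X as [p|]; simpl in *.
      + apply (ex_series_ext (fun n => scal 0 (powp (Cmod (x n)) p))).
        * intros n. rewrite Cmod_0, powp_0. unfold scal; simpl. unfold mult; simpl. ring.
        * apply (@ex_series_scal_l R_AbsRing R_NormedModule). auto.
      + apply (is_lim_seq_ext (fun _ => 0)). intros; rewrite Cmod_0; auto. apply is_lim_seq_const.
    - exists 0. split. lra. intros; rewrite Cmod_0; lra. }
  destruct (density_pos _ (HF U HU HUne)) as [d [Hd [N1 HN1]]].
  destruct (nat_gt (2 / d)) as [M0 HM0].
  exists (S M0). intros m Hm [Hxm Hhc].
  assert (HM0pos : 0 < INR M0).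
  { assert (0 < 2 / d) by (apply Rdiv_lt_0_compat; lra). lra. }
  set (N0 := Nat.max N1 M0).
  set (g := fun j => l ^ j * Cmod (x j) ^ m).
  assert (Hg : forall j, 0 <= g j).
  { intros j. unfold g. apply Rmult_le_pos; apply pow_le; [unfold l|]; apply Cmod_ge_0. }
  set (K := 3/2 + sum_f_R0 g N0).
  pose proof (cond_pos_sum g N0 Hg) as HK0.
  set (y := fun i : nat => match i with O => RtoC K | S _ => RtoC 0 end).
  assert (Hy : in_space X y).
  { destruct X as [p|]; simpl in *.
    - apply (ex_series_incr_1 (fun n => powp (Cmod (y n)) p)).
      apply (ex_series_ext (fun n => scal 0 (powp (Cmod (x n)) p))).
      * intros n. simpl. rewrite Cmod_0, powp_0. unfold scal; simpl. unfold mult; simpl. ring.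
      * apply (@ex_series_scal_l R_AbsRing R_NormedModule). auto.
    - apply (is_lim_seq_incr_1 (fun n => Cmod (y n))).
      apply (is_lim_seq_ext (fun _ => 0)). intros; simpl; rewrite Cmod_0; auto. apply is_lim_seq_const. }
  destruct (Hhc y Hy (1/2) ltac:(lra)) as [n Hn].
  unfold sdist in Hn.
  pose proof (coord_le X _ 0%nat Hv (in_space_sub X _ _ Hv (in_space_iter X lam _ n Hxm) Hy)) as Hc.
  simpl in Hc. rewrite iter_lamB in Hc. unfold seq_pow in Hc.
  rewrite Nat.add_0_r in Hc.
  assert (Hbig : K - 1/2 < g n).
  { unfold g. 
    set (a := Cmult (Cpown lam n) (Cpown (x n) m)) in *.
    pose proof (Cmod_triangle a (Copp (Cminus a (RtoC K)))).
    replace (Cplus a (Copp (Cminus a (RtoC K)))) with (RtoC K) in H by ring.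
    rewrite Cmod_opp, Cmod_R, Rabs_pos_eq in H. 2: (unfold K; lra).
    assert (Hlt : Cmod (Cminus a (RtoC K)) < 1/2) by (eapply Rle_lt_trans; [exact Hc | exact Hn]).
    unfold a in H, Hlt. rewrite Cmod_mult, !Cmod_Cpown in H. fold l in H. lra. }
  assert (HnN0 : (N0 < n)%nat).
  { destruct (Nat.le_gt_cases n N0) as [Hle|]; auto.
    pose proof (sum_ge_term g n N0 Hg Hle). unfold K in Hbig. lra. }
  assert (Hk : exists k, (k <= n)%nat /\ U (Nat.iter k (lamB lam) x) /\ (n <= m * k)%nat).
  { apply NNPP. intro Hno.
    assert (Hb : forall k, (k <= n)%nat -> U (Nat.iter k (lamB lam) x) -> INR k < INR n / INR m).
    { intros k Hk1 Hk2. assert (Hmk : (m * k < n)%nat).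
      { destruct (Nat.lt_ge_cases (m * k) n); auto. exfalso; apply Hno; eauto. }
      apply lt_INR in Hmk. rewrite mult_INR in Hmk.
      assert (0 < INR m) by (apply lt_0_INR; lia).
      apply (Rmult_lt_reg_l (INR m)); auto. field_simplify; lra. }
    assert (0 < INR m) by (apply lt_0_INR; lia).
    assert (0 <= INR n / INR m) by (apply Rdiv_le_0_compat; [apply pos_INR|lra]).
    destruct (count_bound _ _ n H0 Hb) as [_ Hcnt].
    specialize (HN1 n ltac:(lia)).
    assert (HMm : INR M0 <= INR m) by (apply le_INR; lia).
    assert (HnM : INR M0 <= INR n) by (apply le_INR; lia).
    rewrite S_INR in HN1.
    assert (2 <= d * INR M0).
    { apply (Rmult_lt_compat_l d) in HM0; auto. field_simplify in HM0; lra. }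
    assert (INR n / INR m <= d * INR n / 2).
    { unfold Rdiv. apply (Rmult_le_reg_l (INR m)); auto.
      rewrite <- Rmult_assoc, Rinv_r_simpl_m by lra.
      assert (0 <= INR n) by apply pos_INR.
      assert (Hq : 2 * INR n <= d * INR m * INR n) by (apply Rmult_le_compat_r; [auto|nra]).
      lra. }
    nra. }
  destruct Hk as [k [Hkn [[_ [r [Hr Hri]]] Hmk]]].
  specialize (Hri (n - k)%nat). rewrite iter_lamB in Hri.
  replace (k + (n - k))%nat with n in Hri by lia.
  rewrite Cmod_mult, Cmod_Cpown in Hri. fold l in Hri.
  assert (Hpow : 0 <= l ^ k * Cmod (x n) < 1).
  { split. apply Rmult_le_pos; [apply pow_le; unfold l; apply Cmod_ge_0|apply Cmod_ge_0]. lra. }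
  apply (pow_lt_1_compat _ m) in Hpow; [|lia].
  rewrite Rpow_mult_distr, <- pow_mult in Hpow.
  assert (l ^ n <= l ^ (k * m)) by (apply Rle_pow; [unfold l; lra|lia]).
  unfold g in Hbig. unfold K in Hbig.
  assert (0 <= Cmod (x n) ^ m) by (apply pow_le; apply Cmod_ge_0).
  nra.
Qed.
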